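(* Let $f:\mathbb{R}^{n\times n}\to\mathbb{R}$ be differentiable with $\|\nabla f(X)-\nabla f(Y)\|_{\mathsf F}\le L\|X-Y\|_{\mathsf F}$ for all $X,Y\in\mathcal{D}_{[0,1]^n}$. Let $0<p<1$, $\epsilon\ge0$, $\sigma>0$, and let $\bar X\in\mathcal{D}_n$ be a KKT point of \[ \min_{X\in\mathcal{D}_n}\ f(X)+\sigma\sum_{i,j=1}^n (X_{ij}+\epsilon)^p, \] i.e. there exist $S\in\mathbb{R}^{n\times n}$ and $\lambda,\mu\in\mathbb{R}^n$ such that for all $i,j\in\{1,\dots,n\}$: $\bar X_{ij}S_{ij}=0$, $S_{ij}\ge0$, and $(W_{ij}-\lambda_i-\mu_j)(\bar X_{ij}+\epsilon)+\sigma p(\bar X_{ij}+\epsilon)^p=\epsilon S_{ij}$, where $W=\nabla f(\bar X)$. Define \[ \bar c=\Big(\|\bar X\|_0^{1-p}(n+\|\bar X\|_0\epsilon)^p-(n-1)(1+\epsilon)^{p-1}+\sqrt{2n}\,\frac{L\sqrt n+\|\nabla f(\mathbf 0)\|_{\mathsf F}}{\sigma p}\Big)^{\frac{1}{p-1}} . \] Then every $(i,j)$ with $\bar X_{ij}>0$ satisfies $\bar X_{ij}\ge\max(\bar c-\epsilon,0)$.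
   Context: $\mathcal{D}_n=\{X\in\mathbb{R}^{n\times n}: X\mathbf{e}=X^{\mathsf T}\mathbf{e}=\mathbf{e},\ X\ge0\}$ ($\mathbf{e}$ the all-ones vector), $\mathcal{D}_{[0,1]^n}=\{X\in\mathbb{R}^{n\times n}:0\le X_{ij}\le1\}$, $\|X\|_0$ is the number of nonzero entries of $X$, $\mathbf 0$ is the zero matrix, $\|\cdot\|_{\mathsf F}$ the Frobenius norm. *)

(* Defs.v *)
From HB Require Import structures.
From mathcomp Require Import all_boot all_order all_algebra.
From mathcomp Require Import all_classical all_reals all_analysis.
Set Implicit Arguments. Unset Strict Implicit. Unset Printing Implicit Defensive.
Import Order.TTheory GRing.Theory Num.Theory.
Import numFieldNormedType.Exports.
Local Open Scope ring_scope.

Definition frob {R : realType} {n : nat} (X : 'M[R]_n) : R :=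
  Num.sqrt (\sum_(i < n) \sum_(j < n) X i j ^+ 2).

Definition nnz {R : realType} {n : nat} (X : 'M[R]_n) : nat :=
  #|[set ij : 'I_n * 'I_n | X ij.1 ij.2 != 0]|.

Definition doubly_stochastic {R : realType} {n : nat} (X : 'M[R]_n) : Prop :=
  (forall i j, 0 <= X i j) /\
  (forall i, \sum_(j < n) X i j = 1) /\
  (forall j, \sum_(i < n) X i j = 1).

Definition unit_box {R : realType} {n : nat} (X : 'M[R]_n) : Prop :=
  forall i j, 0 <= X i j <= 1.

Definition is_gradient {R : realType} {n : nat}
  (f : 'M[R]_n -> R) (G : 'M[R]_n -> 'M[R]_n) : Prop :=
  forall X, differentiable f X /\
    forall H, ('d f X : 'M[R]_n -> R) H = \sum_(i < n) \sum_(j < n) G X i j * H i j.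

(* Main.v *)
Require Import Defs.
From HB Require Import structures.
From mathcomp Require Import all_boot zify.
Set Implicit Arguments. Unset Strict Implicit.
Section Hall.
Variables (T : finType) (e : rel T).
Definition nbh (B A : {set T}) := [set l in B | [exists k in A, e k l]].

Lemma nbh_sub B A : nbh B A \subset B.
Proof. by apply/subsetP => l; rewrite inE => /andP[]. Qed.

Lemma hall_ind (m : nat) : forall A B : {set T}, (#|A| <= m)%N ->
  (forall A' : {set T}, A' \subset A -> (#|A'| <= #|nbh B A'|)%N) ->
  exists f : T -> T, {in A &, injective f} /\
     {in A, forall k, (f k \in B) && e k (f k)}.
Proof.
elim: m => [|m IH] A B.
  rewrite leqn0 cards_eq0 => /eqP -> _; exists id; split; first by move=> ? ?.
  by move=> k; rewrite inE.
move=> cA hA.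
case: (boolP [exists A0 : {set T}, [&& A0 \subset A, A0 != set0, A0 != A &
                   #|nbh B A0| == #|A0| ]]).
- case/existsP => A0 /and4P[sA0 nA0 neA0 /eqP cN].
  have pA0 : A0 \proper A by rewrite properEneq neA0.
  have [f1 [if1 hf1]] : exists f : T -> T, {in A0 &, injective f} /\
     {in A0, forall k, (f k \in nbh B A0) && e k (f k)}.
    apply: IH; first by have := proper_card pA0; lia.
    move=> A' sA'; apply: (leq_trans (hA A' (subset_trans sA' sA0))).
    apply: subset_leq_card; apply/subsetP => l; rewrite !inE.
    case/andP=> lB /existsP[k /andP[kA' ekl]].
    rewrite lB /=; apply/andP; split; last by apply/existsP; exists k; rewrite kA'.
    by apply/existsP; exists k; rewrite (subsetP sA') ?ekl.
  set A2 := A :\: A0; set B2 := B :\: nbh B A0.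
  have [f2 [if2 hf2]] : exists f : T -> T, {in A2 &, injective f} /\
     {in A2, forall k, (f k \in B2) && e k (f k)}.
    apply: IH.
      have [x xA0] := set0Pn _ nA0.
      have : A2 \proper A.
        rewrite properE subsetDl /=; apply/subsetP => /(_ x (subsetP sA0 x xA0)).
        by rewrite inE xA0.
      move/proper_card; lia.
    move=> C sC.
    have dC : [disjoint C & A0].
      rewrite -setI_eq0; apply/eqP/setP => x; rewrite !inE.
      case xC: (x \in C) => //=; apply/negP => xA0.
      by have := subsetP sC x xC; rewrite inE xA0.
    have h1 := hA (C :|: A0) (introT subUsetP (conj (subset_trans sC (subsetDl _ _)) sA0)).
    rewrite cardsU (disjoint_setI0 dC) cards0 subn0 in h1.
    have h2 : #|nbh B (C :|: A0)| <= #|nbh B2 C| + #|nbh B A0|.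
      apply: leq_trans (leq_card_setU _ _); apply: subset_leq_card.
      apply/subsetP => l; rewrite !inE; case/andP => lB /existsP[k /andP[]].
      rewrite inE => /orP[kC|kA0] ekl.
      + case lN: [exists k0 in A0, e k0 l]; first by rewrite ?lB ?orbT.
        by rewrite lB /= orbF; apply/existsP; exists k; rewrite kC ekl.
      + by rewrite lB /=; apply/orP; right; apply/existsP; exists k; rewrite kA0 ekl.
    lia.
  exists (fun k => if k \in A0 then f1 k else f2 k); split.
  + move=> x y xA yA /=.
    case xA0: (x \in A0); case yA0: (y \in A0).
    * by apply: if1.
    * have := hf1 x xA0; have : y \in A2 by rewrite inE yA0.
      move/hf2 => /andP[]; rewrite inE => /andP[/negP h _ _] /andP[hx _] E.
      by rewrite E in hx.
    * have := hf1 y yA0; have : x \in A2 by rewrite inE xA0.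
      move/hf2 => /andP[]; rewrite inE => /andP[/negP h _ _] /andP[hy _] E.
      by rewrite -E in hy.
    * by apply: if2; rewrite inE ?xA0 ?yA0.
  + move=> k kA /=; case kA0: (k \in A0).
    * by have /andP[] := hf1 k kA0; rewrite inE => /andP[-> _] ->.
    * have : k \in A2 by rewrite inE kA0.
      by move/hf2 => /andP[]; rewrite inE => /andP[_ ->] ->.
- move=> hnt.
  have tight : forall C : {set T}, C \subset A -> C != set0 -> C != A -> #|C| < #|nbh B C|.
    move=> C sC nC neC; rewrite ltn_neqAle hA // andbT eq_sym.
    apply/negP => E; apply/negP: hnt; rewrite negbK.
    by apply/existsP; exists C; rewrite sC nC neC E.
  case: (set_0Vmem A) => [->|[k0 k0A]].
    by exists id; split; [move=> ? ? | move=> k; rewrite inE].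
  have : 0 < #|nbh B [set k0]|.
    by apply: leq_trans (hA _ _); [rewrite cards1 | rewrite sub1set].
  case/card_gt0P => l0; rewrite !inE => /andP[l0B /existsP[k1 /andP[]]].
  rewrite inE => /eqP -> ek0l0.
  have [f2 [if2 hf2]] : exists f : T -> T, {in A :\ k0 &, injective f} /\
     {in A :\ k0, forall k, (f k \in B :\ l0) && e k (f k)}.
    apply: IH; first by have := proper_card (properD1 k0A); lia.
    move=> C sC; case: (set_0Vmem C) => [->|[c cC]]; first by rewrite cards0.
    have sCA : C \subset A by apply: subset_trans sC (subD1set _ _).
    have k0C : k0 \notin C by apply/negP => /(subsetP sC); rewrite !inE eqxx.
    have nC : C != set0 by apply/set0Pn; exists c.
    have := tight C sCA nC.
    have neC : C != A by apply/eqP => E; move: k0C; rewrite E k0A.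
    move/(_ neC) => lt.
    have : #|nbh B C| <= #|nbh (B :\ l0) C| + #|[set l0]|.
      apply: leq_trans (leq_card_setU _ _); apply: subset_leq_card.
      apply/subsetP => l; rewrite !inE => /andP[lB ex].
      by case: (l == l0); rewrite //= lB ex.
    rewrite cards1; lia.
  exists (fun k => if k == k0 then l0 else f2 k); split.
  + move=> x y xA yA /=.
    case: (eqVneq x k0) => [->|xk]; case: (eqVneq y k0) => [->|yk] //.
    * have : y \in A :\ k0 by rewrite !inE yk.
      by move/hf2 => /andP[]; rewrite !inE => /andP[/negP h _ _] E; rewrite E eqxx in h.
    * have : x \in A :\ k0 by rewrite !inE xk.
      by move/hf2 => /andP[]; rewrite !inE => /andP[/negP h _ _] E; rewrite -E eqxx in h.
    * by apply: if2; rewrite !inE ?xk ?yk.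
  + move=> k kA /=; case: (eqVneq k k0) => [->|kk0]; first by rewrite l0B.
    have : k \in A :\ k0 by rewrite !inE kk0.
    by move/hf2 => /andP[]; rewrite !inE => /andP[_ ->] ->.
Qed.
End Hall.
From mathcomp Require Import all_boot all_order all_algebra.
From mathcomp Require Import all_classical all_reals all_analysis.
From mathcomp Require Import ring lra.
Import Order.TTheory GRing.Theory Num.Theory.
Import numFieldNormedType.Exports.
Local Open Scope ring_scope.

Lemma perm_support (R : realType) n (X : 'M[R]_n) i j :
  doubly_stochastic X -> 0 < X i j ->
  exists pi : 'I_n -> 'I_n, injective pi /\ pi i = j /\ forall k, 0 < X k (pi k).
Proof.
move=> [X0 [Xr Xc]] Xij.
have HC : forall A' : {set 'I_n}, A' \subset [set~ i] ->
    (#|A'| <= #|nbh (fun k l => (0 < X k l)%R) [set~ j] A'|)%N.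
  move=> A' sA'.
  set Nb := nbh _ _ _.
  set NN := [set l | [exists k in A', (0 < X k l)%R]].
  have key : (#|A'|%:R : R) < #|Nb|%:R + 1.
    have e1 : (#|A'|%:R : R) = \sum_(k in A') \sum_l X k l.
      by rewrite -sumr_const; apply: eq_bigr => k _; rewrite Xr.
    have e2 : \sum_(k in A') \sum_l X k l <=
              \sum_l (if l \in NN then 1 - X i l else 0).
      rewrite exchange_big /=; apply: ler_sum => l _.
      case: ifP => lNN.
        have -> : 1 - X i l = \sum_(k | k != i) X k l.
          by rewrite -(Xc l) (bigD1 i) //= addrC addrK.
        rewrite [leRHS]big_mkcond [leLHS]big_mkcond /=; apply: ler_sum => k _.
        case: ifP => kA; last by case: ifP.
        by have := fintype.subsetP sA' k kA; rewrite !inE => ->.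
      rewrite big1 // => k kA; apply/eqP; rewrite eq_le X0 andbT.
      rewrite leNgt; apply/negP => Xkl.
      have : l \in NN by rewrite inE; apply/fintype.existsP; exists k; rewrite kA Xkl.
      by rewrite lNN.
    have e3 : \sum_l (if l \in NN then 1 - X i l else 0) <=
              \sum_l ((if l \in Nb then 1 else 0) + (if l == j then 1 - X i j else 0)).
      apply: ler_sum => l _.
      have Xil1 : X i l <= 1.
        rewrite -(Xr i) (bigD1 l) //= lerDl sumr_ge0 // => ? _; exact: X0.
      case: (eqVneq l j) => [->|lj].
        have -> : (j \in Nb) = false by rewrite !inE eqxx.
        rewrite add0r; case: ifP => _ //; rewrite subr_ge0.
        by rewrite -(Xr i) (bigD1 j) //= lerDl sumr_ge0 // => ? _; exact: X0.
      rewrite addr0; have -> : (l \in Nb) = (l \in NN) by rewrite !inE lj.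
      case: ifP => _ //; rewrite lerBlDr lerDl; exact: X0.
    rewrite e1; apply: (le_lt_trans e2); apply: (le_lt_trans e3).
    rewrite big_split /= -!big_mkcond /= big_pred1_eq sumr_const.
    by rewrite ltrD2l ltrBlDr ltrDl.
  by move: key; rewrite natr1 ltr_nat ltnS.
have [f [finj hf]] := @hall_ind _ (fun k l => (0 < X k l)%R) _ [set~ i] [set~ j] (leqnn _) HC.
exists (fun k => if k == i then j else f k); split; last split.
- move=> x y /=.
  case: (eqVneq x i) => [->|xi]; case: (eqVneq y i) => [->|yi] //.
  + have : y \in [set~ i] by rewrite !inE.
    by move/hf => /andP[]; rewrite !inE => /negP h _ E; rewrite E eqxx in h.
  + have : x \in [set~ i] by rewrite !inE.
    by move/hf => /andP[]; rewrite !inE => /negP h _ E; rewrite -E eqxx in h.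
  + by apply: finj; rewrite !inE.
- by rewrite eqxx.
- move=> k /=; case: (eqVneq k i) => [->//|ki].
  have : k \in [set~ i] by rewrite !inE.
  by move/hf => /andP[].
Qed.

Section Frob.
Variable R : realType.
Variable n : nat.

Lemma le_sum2 (F : 'I_n -> 'I_n -> R) k l : (forall k l, 0 <= F k l) ->
  F k l <= \sum_k \sum_l F k l.
Proof.
move=> F0; rewrite (bigD1 k) //= (bigD1 l) //= -addrA lerDl.
by rewrite addr_ge0 // sumr_ge0 // => i _; rewrite sumr_ge0.
Qed.

Lemma frob_sq (a : 'M[R]_n) : frob a ^+ 2 = \sum_k \sum_l a k l ^+ 2.
Proof.
by rewrite /frob sqr_sqrtr // sumr_ge0 // => k _; rewrite sumr_ge0 // => l _; rewrite sqr_ge0.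
Qed.

Lemma frob_ge0 (a : 'M[R]_n) : 0 <= frob a.
Proof. exact: sqrtr_ge0. Qed.

Lemma frob_eq0 (a : 'M[R]_n) k l : frob a = 0 -> a k l = 0.
Proof.
move=> h; have := frob_sq a; rewrite h expr0n /= => /esym E.
have := @le_sum2 (fun k l => a k l ^+ 2) k l (fun k l => sqr_ge0 _).
rewrite E => h2; apply/eqP; rewrite -sqrf_eq0 eq_le h2 sqr_ge0 //.
Qed.

Lemma frob_cs (a b : 'M[R]_n) :
  \sum_k \sum_l a k l * b k l <= frob a * frob b.
Proof.
set A := frob a; set B := frob b.
have A0 : 0 <= A by apply: frob_ge0.
have B0 : 0 <= B by apply: frob_ge0.
case: (eqVneq A 0) => [Ae|An].
  rewrite Ae mul0r big1 // => k _; rewrite big1 // => l _.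
  by rewrite (frob_eq0 k l Ae) mul0r.
case: (eqVneq B 0) => [Be|Bn].
  rewrite Be mulr0 big1 // => k _; rewrite big1 // => l _.
  by rewrite (frob_eq0 k l Be) mulr0.
have Ap : 0 < A by rewrite lt_def An.
have Bp : 0 < B by rewrite lt_def Bn.
have E1 : \sum_k \sum_l (2*A*B*(a k l * b k l)) = 2*A*B * \sum_k \sum_l a k l * b k l.
  by rewrite mulr_sumr; apply: eq_bigr => k _; rewrite mulr_sumr.
have E2 : \sum_k \sum_l (B^+2 * a k l ^+ 2 + A^+2 * b k l ^+2)
          = B^+2 * A^+2 + A^+2 * B^+2.
  rewrite /A /B !frob_sq !mulr_sumr -big_split; apply: eq_bigr => k _.
  by rewrite !mulr_sumr -big_split.
have h : \sum_k \sum_l (2*A*B*(a k l * b k l)) <=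
         \sum_k \sum_l (B^+2 * a k l ^+ 2 + A^+2 * b k l ^+2).
  apply: ler_sum => k _; apply: ler_sum => l _.
  have := sqr_ge0 (B * a k l - A * b k l); nra.
rewrite E1 E2 in h.
set s := \sum_k _ in h *.
have ABp : 0 < A * B by apply: mulr_gt0.
nra.
Qed.

Lemma frob_triangle (a b : 'M[R]_n) : frob (a + b) <= frob a + frob b.
Proof.
have hs : frob (a + b) ^+ 2 <= (frob a + frob b) ^+ 2.
  have cs := frob_cs a b.
  have -> : frob (a + b) ^+ 2 = frob a ^+ 2 + 2 * \sum_k \sum_l a k l * b k l + frob b ^+ 2.
    rewrite !frob_sq mulr_sumr -!big_split; apply: eq_bigr => k _.
    rewrite mulr_sumr -!big_split; apply: eq_bigr => l _; rewrite mxE /=; ring.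
  nra.
have := frob_ge0 (a + b); have := frob_ge0 a; have := frob_ge0 b; nra.
Qed.

End Frob.

Section Pow.
Variable R : realType.

Lemma amgm (t a p : R) : 0 <= t -> 0 < a -> 0 < p -> p < 1 ->
  t `^ p * a `^ (1 - p) <= p * t + (1 - p) * a.
Proof.
move=> t0 a0 p0 p1.
have q0 : 0 < 1 - p by rewrite subr_gt0.
have P0 : 0 < p^-1 by rewrite invr_gt0.
have Q0 : 0 < (1 - p)^-1 by rewrite invr_gt0.
have := @conjugate_powR R (t `^ p) (a `^ (1 - p)) p^-1 (1 - p)^-1
  (powR_ge0 _ _) (powR_ge0 _ _) P0 Q0.
rewrite -!powRrM mulfV ?gt_eqF // mulfV ?gt_eqF // (powRr1 t0) (powRr1 (ltW a0)).
move=> h.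
have e1 : p^-1^-1 = p by apply: invrK.
have e2 : (1 - p)^-1^-1 = 1 - p by apply: invrK.
have e3 : p^-1^-1 + (1 - p)^-1^-1 = 1 by rewrite e1 e2 addrC subrK.
have := h e3.
by move=> h2; apply: le_trans h2 _; rewrite e1 e2 (mulrC t) (mulrC a).
Qed.

Lemma powR_decr (x y r : R) : 0 < x -> x <= y -> r < 0 -> y `^ r <= x `^ r.
Proof.
move=> x0 xy r0.
have y0 : 0 < y by apply: lt_le_trans xy.
have hr : 0 <= - r by rewrite oppr_ge0 ltW.
have -> : r = - (- r) by rewrite opprK.
rewrite !(powRN _ (- r)) lef_pV2 ?posrE ?powR_gt0 //.
by apply: (ge0_ler_powR hr) => //; rewrite nnegrE ltW.
Qed.

End Pow.

Lemma power_mean (R : realType) n (X : 'M[R]_n) i j (eps p : R) :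
  doubly_stochastic X -> 0 < X i j -> 0 <= eps -> 0 < p -> p < 1 ->
  \sum_k \sum_l X k l * (X k l + eps) `^ (p - 1)
    <= (nnz X)%:R `^ (1 - p) * (n%:R + (nnz X)%:R * eps) `^ p.
Proof.
move=> [X0 [Xr Xc]] Xij e0 p0 p1.
set m : R := (nnz X)%:R.
have mE : m = \sum_k \sum_l ((X k l != 0)%:R : R).
  rewrite /m /nnz -sum1_card big_mkcond /= natr_sum pair_big /=.
  by apply: eq_bigr => -[k l] _; rewrite inE /=; case: ifP.
have Xn : \sum_k \sum_l X k l = n%:R.
  by under eq_bigr => k _ do rewrite Xr; rewrite sumr_const card_ord.
have mpos : 0 < m.
  rewrite mE; apply: lt_le_trans (@le_sum2 R n (fun k l => ((X k l != 0)%:R : R)) i j _).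
    by rewrite (gt_eqF Xij) ltr01.
  by move=> k l; rewrite ler0n.
have n0 : (0 < n)%N := leq_ltn_trans (leq0n i) (ltn_ord i).
set s := n%:R + m * eps.
have s0 : 0 < s by rewrite /s ltr_pwDl ?ltr0n // mulr_ge0 // ltW.
set a := s / m.
have a0 : 0 < a by rewrite divr_gt0.
set al := a `^ (1 - p).
have al0 : 0 < al by rewrite powR_gt0.
set c := p * eps + (1 - p) * a.
have term : forall k l, X k l * (X k l + eps) `^ (p - 1)
    <= al^-1 * (p * X k l + c * (X k l != 0)%:R).
  move=> k l; case: (eqVneq (X k l) 0) => [->|xn].
    rewrite /= mul0r !mulr0 addr0; apply: mulr_ge0; [by rewrite invr_ge0 ltW | exact: lexx].
  have xp : 0 < X k l by rewrite lt_def xn X0.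
  have xe : 0 < X k l + eps by lra.
  rewrite /= mulr1.
  apply: (@le_trans _ _ ((X k l + eps) `^ p)).
    rewrite -(mulr_powRB1 (ltW xe) p0) ler_wpM2r ?powR_ge0 //.
    by rewrite lerDl.
  have := amgm (ltW xe) a0 p0 p1.
  rewrite -ler_pdivlMr // => h; apply: le_trans h _.
  rewrite le_eqVlt; apply/orP; left; apply/eqP; rewrite /c; ring.
have E : \sum_k \sum_l al^-1 * (p * X k l + c * (X k l != 0)%:R)
    = al^-1 * (p * n%:R + c * m).
  rewrite -Xn mE !mulr_sumr -big_split mulr_sumr; apply: eq_bigr => k _.
  by rewrite !mulr_sumr -big_split mulr_sumr.
have hal : al = s `^ (1 - p) / m `^ (1 - p).
  rewrite /al /a powRM ?(ltW s0) ?invr_ge0 ?(ltW mpos) //.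
  by rewrite -powR_inv1 ?(ltW mpos) // -powRrM mulN1r powRN.
have hsp : s `^ p = s / s `^ (1 - p).
  have h0 : (1 == 1 - p) ==> (s != 0) by rewrite (gt_eqF s0) implybT.
  have h := @powRB R s 1 (1 - p) h0.
  rewrite powRr1 ?(ltW s0) // in h; rewrite -h; congr (powR s _); ring.
have am : a * m = s by rewrite /a mulfVK ?gt_eqF.
apply: le_trans (ler_sum _ (fun k _ => ler_sum _ (fun l _ => term k l))) _.
rewrite E.
have -> : p * n%:R + c * m = s.
  have h2 : ((1 - p) * a) * m = (1 - p) * s by rewrite -mulrA am.
  rewrite /c mulrDl h2 /s; ring.
by rewrite hal hsp invf_div mulrA mulrAC.
Qed.

Unset Implicit Arguments.
Set Strict Implicit.

Theorem theorem3p4 (R : realType) (n : nat)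
  (f : 'M[R]_n -> R) (G : 'M[R]_n -> 'M[R]_n) (L p eps sigma : R)
  (Xb S : 'M[R]_n) (lam mu : 'I_n -> R) :
  is_gradient f G ->
  (forall X Y : 'M[R]_n, unit_box X -> unit_box Y ->
     frob (G X - G Y) <= L * frob (X - Y)) ->
  0 < p -> p < 1 -> 0 <= eps -> 0 < sigma ->
  doubly_stochastic Xb ->
  (forall i j, Xb i j * S i j = 0) ->
  (forall i j, 0 <= S i j) ->
  (forall i j, (G Xb i j - lam i - mu j) * (Xb i j + eps)
                 + sigma * p * (Xb i j + eps) `^ p = eps * S i j) ->
  let cbar :=
    ((nnz Xb)%:R `^ (1 - p) * (n%:R + (nnz Xb)%:R * eps) `^ p
     - (n%:R - 1) * (1 + eps) `^ (p - 1)
     + Num.sqrt (2 * n%:R) * ((L * Num.sqrt n%:R + frob (G 0)) / (sigma * p)))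
    `^ (1 / (p - 1)) in
  forall i j, 0 < Xb i j -> Num.max (cbar - eps) 0 <= Xb i j.
Proof.
move=> _ Hlip p0 p1 e0 s0 Xds XS S0 KKT cbar i j Xij.
have [X0 [Xr Xc]] := Xds.
set W := G Xb.
set sp := sigma * p.
have sp0 : 0 < sp by rewrite mulr_gt0.
set q := fun k l => (Xb k l + eps) `^ (p - 1).
have Xle1 : forall k l, Xb k l <= 1.
  move=> k l; rewrite -(Xr k) (bigD1 l) //= lerDl sumr_ge0 // => ? _; exact: X0.
have n0 : (0 < n)%N := leq_ltn_trans (leq0n i) (ltn_ord i).
have H1 : forall k l, 0 < Xb k l -> W k l - lam k - mu l = - (sp * q k l).
  move=> k l xp.
  have Skl : S k l = 0.
    by have /eqP := XS k l; rewrite mulf_eq0 (gt_eqF xp) /= => /eqP.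
  have xe : 0 < Xb k l + eps by lra.
  have := KKT k l; rewrite Skl mulr0 -(mulr_powRB1 (ltW xe) p0) => h.
  have : (W k l - lam k - mu l + sp * q k l) * (Xb k l + eps) = 0.
    by rewrite -h /q /sp /W; ring.
  move/eqP; rewrite mulf_eq0 (gt_eqF xe) orbF addr_eq0 => /eqP //.
have [pi [piinj [pii pisup]]] := perm_support Xds Xij.
have rowl : forall k, \sum_l Xb k l * lam k = lam k.
  by move=> k; rewrite -mulr_suml Xr mul1r.
have colm : forall l, \sum_k Xb k l * mu l = mu l.
  by move=> l; rewrite -mulr_suml Xc mul1r.
have H2 : \sum_k \sum_l Xb k l * (W k l - lam k - mu l)
    = \sum_k \sum_l Xb k l * W k l - \sum_k lam k - \sum_l mu l.
  have -> : \sum_l mu l = \sum_k \sum_l Xb k l * mu l.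
    by rewrite exchange_big /=; apply: eq_bigr => l _; rewrite colm.
  rewrite -!sumrB; apply: eq_bigr => k _.
  rewrite -[X in _ = _ - X - _]rowl -!sumrB; apply: eq_bigr => l _ /=; ring.
have H2' : \sum_k \sum_l Xb k l * (W k l - lam k - mu l)
    = - (sp * \sum_k \sum_l Xb k l * q k l).
  rewrite mulr_sumr -sumrN; apply: eq_bigr => k _.
  rewrite mulr_sumr -sumrN; apply: eq_bigr => l _.
  case: (eqVneq (Xb k l) 0) => [->|xn]; first by rewrite !mul0r mulr0 oppr0.
  by rewrite H1 ?lt_def ?xn ?X0 //; ring.
have H3 : \sum_k (W k (pi k) - lam k - mu (pi k))
    = \sum_k W k (pi k) - \sum_k lam k - \sum_l mu l.
  rewrite !sumrB; congr (_ - _); symmetry; exact: (reindex_inj piinj).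
have H3' : \sum_k (W k (pi k) - lam k - mu (pi k)) = - (sp * \sum_k q k (pi k)).
  rewrite mulr_sumr -sumrN; apply: eq_bigr => k _; exact: H1.
have EqA : \sum_k W k (pi k) - \sum_k \sum_l Xb k l * W k l
    = - (sp * \sum_k q k (pi k)) + sp * \sum_k \sum_l Xb k l * q k l.
  rewrite -H3' H3 -[X in _ = _ + X]opprK -H2' H2; ring.
set c1 := (1 + eps) `^ (p - 1).
have Qlow : q i j + (n%:R - 1) * c1 <= \sum_k q k (pi k).
  rewrite (bigD1 i) //= pii lerD2l.
  have hs : \sum_(k < n) c1 = c1 + \sum_(k < n | k != i) c1 by rewrite (bigD1 i).
  rewrite sumr_const card_ord in hs.
  have -> : (n%:R - 1) * c1 = \sum_(k < n | k != i) c1.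
    by rewrite mulrBl mul1r mulr_natl hs; ring.
  apply: ler_sum => k _; apply: powR_decr.
  - by have := pisup k; lra.
  - by rewrite lerD2r.
  - by rewrite subr_lt0.
set D := \sum_k \sum_l Xb k l * W k l - \sum_k W k (pi k).
set P : 'M[R]_n := \matrix_(k, l) ((pi k == l)%:R : R).
have HP : forall (Z : 'M[R]_n) k, \sum_l P k l * Z k l = Z k (pi k).
  move=> Z k; rewrite (bigD1 (pi k)) //= mxE eqxx mul1r big1 ?addr0 // => l lk.
  by rewrite mxE eq_sym (negbTE lk) mul0r.
have HD : D = \sum_k \sum_l (Xb - P) k l * W k l.
  rewrite /D -(eq_bigr _ (fun k _ => HP W k)) -sumrB; apply: eq_bigr => k _.
  by rewrite -sumrB; apply: eq_bigr => l _; rewrite !mxE; ring.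
have Xn : \sum_k \sum_l Xb k l = n%:R.
  by under eq_bigr => k _ do rewrite Xr; rewrite sumr_const card_ord.
have Prow : forall k, \sum_l P k l = 1.
  move=> k; rewrite (bigD1 (pi k)) //= mxE eqxx big1 ?addr0 // => l lk.
  by rewrite mxE eq_sym (negbTE lk).
have Pn : \sum_k \sum_l P k l = n%:R.
  by under eq_bigr => k _ do rewrite Prow; rewrite sumr_const card_ord.
have HXP : frob (Xb - P) <= Num.sqrt (2 * n%:R).
  rewrite /frob ler_sqrt ?mulr_ge0 ?ler0n //.
  apply: (@le_trans _ _ (\sum_k \sum_l (Xb k l + P k l))).
    apply: ler_sum => k _; apply: ler_sum => l _; rewrite !mxE.
    have := X0 k l; have := Xle1 k l.
    by case: (pi k == l); rewrite ?mulr1n ?mulr0n /=; nra.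
  rewrite (eq_bigr (fun k => \sum_l Xb k l + \sum_l P k l)); last first.
    by move=> k _; rewrite big_split.
  by rewrite big_split /= Xn Pn -mulr2n mulr_natl.
have ub0 : unit_box (0 : 'M[R]_n) by move=> k l; rewrite mxE lexx ler01.
have ubX : unit_box Xb by move=> k l; rewrite X0 Xle1.
have L0 : 0 <= L.
  have ub1 : unit_box (const_mx 1 : 'M[R]_n) by move=> k l; rewrite mxE ler01 lexx.
  have hpos : 0 < frob (0 - const_mx 1 : 'M[R]_n).
    rewrite lt_def frob_ge0 andbT; apply/eqP => /(frob_eq0 i i).
    by rewrite !mxE sub0r => /eqP; rewrite oppr_eq0 oner_eq0.
  have := Hlip 0 (const_mx 1) ub0 ub1.
  have := frob_ge0 (G 0 - G (const_mx 1)); nra.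
have HW : frob W <= L * Num.sqrt n%:R + frob (G 0).
  have := frob_triangle (W - G 0) (G 0); rewrite subrK => h.
  apply: le_trans h _; rewrite lerD2r.
  apply: le_trans (Hlip Xb 0 ubX ub0) _.
  rewrite subr0; apply: (ler_wpM2l L0).
  rewrite /frob ler_sqrt ?ler0n // -Xn.
  apply: ler_sum => k _; apply: ler_sum => l _.
  by have := X0 k l; have := Xle1 k l; nra.
have Dle : D <= Num.sqrt (2 * n%:R) * (L * Num.sqrt n%:R + frob (G 0)).
  rewrite HD; apply: le_trans (frob_cs _ _) _.
  by apply: ler_pM => //; apply: frob_ge0.
have Mb := power_mean Xds Xij e0 p0 p1.
set Mv := (nnz Xb)%:R `^ (1 - p) * (n%:R + (nnz Xb)%:R * eps) `^ p in Mb.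
set B := L * Num.sqrt n%:R + frob (G 0) in Dle.
set s2 := Num.sqrt (2 * n%:R) in Dle.
set SXq := \sum_k \sum_l Xb k l * q k l in EqA.
have SXqE : SXq = \sum_k \sum_l Xb k l * (Xb k l + eps) `^ (p - 1) by [].
rewrite -SXqE in Mb.
set Sq := \sum_k q k (pi k) in EqA Qlow.
have key : q i j <= Mv - (n%:R - 1) * c1 + s2 * (B / sp).
  rewrite -(ler_pM2l sp0).
  have E : sp * (s2 * (B / sp)) = s2 * B by field; rewrite gt_eqF.
  rewrite mulrDr mulrBr E.
  have h1 : sp * (q i j + (n%:R - 1) * c1) <= sp * Sq by rewrite ler_pM2l.
  have h2 : sp * SXq <= sp * Mv by rewrite ler_pM2l.
  move: h1 h2 Dle EqA; rewrite /D; lra.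
have xe : 0 < Xb i j + eps by lra.
have q0 : 0 < q i j by rewrite /q powR_gt0.
have bneg : 1 / (p - 1) < 0 by rewrite div1r invr_lt0 subr_lt0.
have xeq : Xb i j + eps = q i j `^ (1 / (p - 1)).
  rewrite /q -powRrM mulrC div1r mulVf ?powRr1 ?ltW //.
  by rewrite subr_eq0 lt_eqF.
rewrite /cbar ge_max (ltW Xij) andbT lerBlDr xeq.
rewrite -/Mv -/B -/s2 -/c1 -/sp.
exact: powR_decr q0 key bneg.
Qed.
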